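(* Let $1\le S\le N$ and $\mathcal{A}=\{A\subseteq\{1,\dots,N\}:|A|\le S\}$. Let $X_1,\dots,X_N$ be i.i.d. random variables taking values $H$ and $L$, $H>L>0$, with probabilities $p\in(0,1)$ and $1-p$. Then for every $r>1$, $$\sup\{\mathrm{ELR}(\tilde\pi^o): 0<L<H\le rL,\ p\in(0,1)\}\le \frac{S}{S+N},$$ and $$\sup\{\mathrm{ELR}(\tilde\pi^o): 0<L<H,\ p\in(0,1)\}=\frac{S}{S+N}.$$
   Context: This models an auction of $S$ identical items among $N$ unit-demand buyers with values $X_n$ (independent). An allocation rule $\pi$ maps each bid vector $v\in\{L,H\}^N$ to a probability distribution $(\pi_A(v))_{A\in\mathcal{A}}$ on $\mathcal{A}$; $Q_n(v)=\sum_{A\ni n}\pi_A(v)$. The (monotone) virtual valuation is $\overline{w}(H)=H$, $\overline{w}(L)=(L-pH)/(1-p)$. An allocation rule is optimal (the allocation rule of a revenue-maximizing Bayesian incentive compatible, individually rational mechanism) if for every $v$, $\pi(v)$ is supported on $\arg\max_{A\in\mathcal{A}}\sum_{n\in A}\overline{w}(v_n)$. $\tilde\pi^o$ denotes an optimal allocation rule maximizing realized welfare $\mathbb{E}[\sum_nQ_n(X)X_n]$ among optimal allocation rules. $\mathrm{MSW}=\mathbb{E}[\max_{A\in\mathcal{A}}\sum_{n\in A}X_n]$ and $\mathrm{ELR}(\pi)=(\mathrm{MSW}-\mathbb{E}[\sum_nQ_n(X)X_n])/\mathrm{MSW}$. *)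

(* Defs.v *)
From HB Require Import structures.
From mathcomp Require Import all_boot all_order all_algebra.
From mathcomp Require Import reals.
Set Implicit Arguments. Unset Strict Implicit. Unset Printing Implicit Defensive.
Import Order.TTheory GRing.Theory Num.Theory.
Local Open Scope ring_scope.

(* Bid / value profiles: v n = true means buyer n has value H, false means L. *)
Definition bids (N : nat) := {ffun 'I_N -> bool}.

Section Auction.
Variables (R : realType) (N S : nat) (L H p : R).

Definition val (b : bool) : R := if b then H else L.

Definition vval (b : bool) : R := if b then H else (L - p * H) / (1 - p).

Definition prob (v : bids N) : R := \prod_(n < N) (if v n then p else 1 - p).

Definition alloc_rule (pi : bids N -> {set 'I_N} -> R) : Prop :=
  forall v : bids N,
    [/\ forall A, 0 <= pi v A,
        forall A, pi v A != 0 -> (#|A| <= S)%N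
      & \sum_(A : {set 'I_N}) pi v A = 1].

Definition Qn (pi : bids N -> {set 'I_N} -> R) (n : 'I_N) (v : bids N) : R :=
  \sum_(A : {set 'I_N} | n \in A) pi v A.

Definition is_optimal (pi : bids N -> {set 'I_N} -> R) : Prop :=
  alloc_rule pi /\
  forall (v : bids N) (A : {set 'I_N}), pi v A != 0 ->
    forall B : {set 'I_N}, (#|B| <= S)%N ->
      \sum_(n in B) vval (v n) <= \sum_(n in A) vval (v n).

Definition welfare (pi : bids N -> {set 'I_N} -> R) : R :=
  \sum_(v : bids N) prob v * \sum_(n < N) Qn pi n v * val (v n).

Definition MSW : R :=
  \sum_(v : bids N) prob v *
    \big[Num.max/0]_(A : {set 'I_N} | (#|A| <= S)%N) \sum_(n in A) val (v n).

Definition ELR (pi : bids N -> {set 'I_N} -> R) : R := (MSW - welfare pi) / MSW.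

Definition is_tilde_opt (pi : bids N -> {set 'I_N} -> R) : Prop :=
  is_optimal pi /\ forall pi', is_optimal pi' -> welfare pi' <= welfare pi.

End Auction.

Arguments is_tilde_opt {R} N S L H p pi.
Arguments ELR {R} N S L H p pi.

(* Main.v *)
Require Import Defs.
From HB Require Import structures.
From mathcomp Require Import all_boot all_order all_algebra.
From mathcomp Require Import reals.
From mathcomp Require Import ring lra.
Set Implicit Arguments. Unset Strict Implicit. Unset Printing Implicit Defensive.
Import Order.TTheory GRing.Theory Num.Theory.
Local Open Scope ring_scope.

Lemma sub_card (T : finType) (A : {set T}) m : (m <= #|A|)%N ->
  exists B : {set T}, B \subset A /\ #|B| = m.
Proof.
elim: m => [|m IH] hm; first by exists set0; rewrite sub0set cards0.
have [B [sBA cB]] := IH (ltnW hm).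
have : (0 < #|A :\: B|)%N by rewrite cardsD (setIidPr sBA) cB subn_gt0.
case/card_gt0P => x; rewrite inE => /andP [xB xA].
exists (x |: B); split; first by rewrite subUset sub1set xA.
by rewrite cardsU1 xB cB.
Qed.

Lemma mk_set (T : finType) (C : {set T}) m : (m <= #|T|)%N ->
  exists B : {set T}, #|B| = m /\ #|B :&: C| = minn m #|C|.
Proof.
move=> hm; case: (leqP m #|C|) => hmC.
  have [B [sBC cB]] := sub_card hmC.
  exists B; rewrite (setIidPl sBC) cB; by split.
have h2 : (m - #|C| <= #|~: C|)%N.
  by rewrite leq_subLR cardsC.
have [D [sD cD]] := sub_card h2.
exists (C :|: D); rewrite setIUl setIid.
have dis : C :&: D = set0.
  apply/eqP; rewrite -subset0; apply/subsetP => x; rewrite !inE => /andP [xC xD].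
  by move/subsetP: sD => /(_ x xD); rewrite inE xC.
have dis' : D :&: C = set0 by rewrite setIC.
rewrite dis' setU0 cardsU dis cards0 subn0 cD; split=>//.
by rewrite subnKC // ltnW.
Qed.

Section Main.
Variables (R : realType) (N S : nat) (L H p : R).
Hypotheses (SN : (S <= N)%N) (S1 : (1 <= S)%N) (L0 : 0 < L) (LH : L < H) (p0 : 0 < p) (p1 : p < 1).

Ltac hyps := have p0' := p0; have p1' := p1; have L0' := L0; have LH' := LH.

Definition Tv (v : bids N) : {set 'I_N} := [set n | v n].
Definition ind (b : bool) : R := if b then 1 else 0.

Lemma sum_split (f : bool -> R) (v : bids N) (C : {set 'I_N}) :
  \sum_(n in C) f (v n) =
  #|C :&: Tv v|%:R * f true + (subn #|C| #|C :&: Tv v|)%:R * f false.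
Proof.
rewrite (big_setID (Tv v)) /=.
have -> : \sum_(i in C :&: Tv v) f (v i) = \sum_(i in C :&: Tv v) f true.
  by apply: eq_bigr => n; rewrite in_setI /Tv in_set => /andP[_ ->].
have -> : \sum_(i in C :\: Tv v) f (v i) = \sum_(i in C :\: Tv v) f false.
  by apply: eq_bigr => n; rewrite in_setD /Tv in_set => /andP[/negbTE -> _].
by rewrite !sumr_const cardsD !mulr_natl.
Qed.


Lemma Eprod (g : 'I_N -> bool -> R) :
  \sum_(v : bids N) prob p v * \prod_l g l (v l) =
  \prod_l (p * g l true + (1 - p) * g l false).
Proof.
transitivity (\prod_l \sum_(b : bool) (if b then p else 1 - p) * g l b).
  rewrite bigA_distr_bigA; apply: eq_bigr => v _.
  by rewrite /prob -big_split.
by apply: eq_bigr => l _; rewrite big_bool.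
Qed.

Lemma Eone : \sum_(v : bids N) prob p v = 1.
Proof.
transitivity (\sum_(v : bids N) prob p v * \prod_(l < N) (fun _ _ => 1 : R) l (v l)).
  by apply: eq_bigr => v _; rewrite big1_eq mulr1.
by rewrite (Eprod (fun _ _ => 1)); apply: big1 => l _; rewrite !mulr1 addrC subrK.
Qed.

Lemma Eind i : \sum_(v : bids N) prob p v * ind (v i) = p.
Proof.
pose g := fun (l : 'I_N) b => if l == i then ind b else 1.
transitivity (\sum_(v : bids N) prob p v * \prod_l g l (v l)).
  apply: eq_bigr => v _; congr (_ * _).
  by rewrite (bigD1 i) //= /g eqxx big1 ?mulr1 // => l /negbTE ->.
rewrite Eprod (bigD1 i) //= /g eqxx big1 => [|l /negbTE ->].
  by rewrite /ind mulr1 mulr0 addr0 mulr1.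
by rewrite !mulr1 addrC subrK.
Qed.

Lemma Eind2 i j : i != j ->
  \sum_(v : bids N) prob p v * (ind (v i) * ind (v j)) = p ^+ 2.
Proof.
move=> ij.
pose g := fun (l : 'I_N) b => if l == i then ind b else if l == j then ind b else 1.
have ji : (j == i) = false by rewrite eq_sym (negbTE ij).
have ji' : j != i by rewrite ji.
transitivity (\sum_(v : bids N) prob p v * \prod_l g l (v l)).
  apply: eq_bigr => v _; congr (_ * _).
  rewrite (bigD1 i) //= (bigD1 j ji') /= /g eqxx ji eqxx big1 ?mulr1 //.
  by move=> l /andP[/negbTE -> /negbTE ->].
rewrite Eprod (bigD1 i) //= (bigD1 j ji') /= /g eqxx ji eqxx big1.
  by rewrite /ind !mulr1 !mulr0 !addr0 expr2.
by move=> l /andP[/negbTE -> /negbTE ->]; rewrite !mulr1 addrC subrK.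
Qed.

Lemma kE (v : bids N) : #|Tv v|%:R = \sum_n ind (v n) :> R.
Proof.
rewrite -sum1_card natr_sum big_mkcond /=.
by apply: eq_bigr => n _; rewrite /Tv in_set.
Qed.

Lemma Ek : \sum_(v : bids N) prob p v * #|Tv v|%:R = N%:R * p.
Proof.
under eq_bigr do rewrite kE big_distrr.
rewrite exchange_big /= (eq_bigr (fun=> p)) => [|i _]; last exact: Eind.
by rewrite sumr_const card_ord mulr_natl.
Qed.


Lemma Ek2_step i : \sum_(v : bids N) prob p v * (ind (v i) * \sum_j ind (v j)) =
  p + (N.-1)%:R * p ^+ 2.
Proof.
transitivity (\sum_j \sum_(v : bids N) prob p v * (ind (v i) * ind (v j))).
  rewrite exchange_big /=; apply: eq_bigr => v _.
  by rewrite big_distrr /= big_distrr.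
rewrite (bigD1 i) //=; congr (_ + _).
  rewrite -[RHS](Eind i); apply: eq_bigr => w _; congr (_ * _).
  by rewrite /ind; case: (w i); rewrite ?mulr1 ?mulr0.
rewrite (eq_bigr (fun=> p ^+ 2)) => [|j ji]; last by apply: Eind2; rewrite eq_sym.
by rewrite sumr_const cardC1 card_ord mulr_natl.
Qed.

Lemma Ek2 : \sum_(v : bids N) prob p v * #|Tv v|%:R ^+ 2 =
  N%:R * (p + (N.-1)%:R * p ^+ 2).
Proof.
transitivity (\sum_i \sum_(v : bids N) prob p v * (ind (v i) * \sum_j ind (v j))).
  rewrite exchange_big /=; apply: eq_bigr => v _.
  by rewrite kE expr2 big_distrl /= big_distrr.
rewrite (eq_bigr (fun=> p + (N.-1)%:R * p ^+ 2)) => [|i _]; last exact: Ek2_step.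
by rewrite sumr_const card_ord -[(_ + _) *+ N]mulr_natl.
Qed.


Lemma prob_ge0 (v : bids N) : 0 <= prob p v.
Proof. hyps; by apply: prodr_ge0 => l _; case: ifP => _; lra. Qed.

Lemma min_pt (k : nat) (mu : R) : 0 < mu ->
  S%:R * ((2 * mu - S%:R + 1) * k%:R - k%:R ^+ 2) <= (minn k S)%:R * mu ^+ 2.
Proof.
move=> mu0; hyps.
have s1 : 1 <= S%:R :> R by rewrite ler1n.
case: (leqP k S) => hk.
  case: k hk => [|k] hk; first by rewrite !mulr0 sub0r expr0n /= oppr0 mulr0 mul0r.
  have k1 : 1 <= k.+1%:R :> R by rewrite ler1n.
  rewrite -subr_ge0.
  have -> : k.+1%:R * mu ^+ 2 - S%:R * ((2 * mu - S%:R + 1) * k.+1%:R - k.+1%:R ^+ 2)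
     = k.+1%:R * ((mu - S%:R) ^+ 2 + S%:R * (k.+1%:R - 1)) by ring.
  apply: mulr_ge0; first lra.
  by apply: addr_ge0; [exact: sqr_ge0 | apply: mulr_ge0; lra].
have k1 : S%:R <= k%:R :> R by rewrite ler_nat ltnW.
rewrite -subr_ge0.
have -> : S%:R * mu ^+ 2 - S%:R * ((2 * mu - S%:R + 1) * k%:R - k%:R ^+ 2)
   = S%:R * ((mu - k%:R) ^+ 2 + k%:R * (S%:R - 1)) by ring.
apply: mulr_ge0; first lra.
by apply: addr_ge0; [exact: sqr_ge0 | apply: mulr_ge0; lra].
Qed.

Definition Em := \sum_(v : bids N) prob p v * (minn #|Tv v| S)%:R.

Lemma Em_lb : S%:R * N%:R * p <= Em * (S%:R + (N.-1)%:R * p).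
Proof.
hyps; set mu := S%:R + (N.-1)%:R * p.
have s1 : 1 <= S%:R :> R by rewrite ler1n.
have n0 : 0 <= (N.-1)%:R :> R by [].
have mu0 : 0 < mu by rewrite /mu; nra.
set a := 2 * mu - S%:R + 1.
have h : \sum_(v : bids N) prob p v * (S%:R * (a * #|Tv v|%:R - #|Tv v|%:R ^+ 2))
    <= Em * mu ^+ 2.
  rewrite /Em mulr_suml; apply: ler_sum => v _; rewrite -mulrA.
  by apply: ler_wpM2l; [exact: prob_ge0 | exact: min_pt].
have e : \sum_(v : bids N) prob p v * (S%:R * (a * #|Tv v|%:R - #|Tv v|%:R ^+ 2))
   = S%:R * a * (\sum_(v : bids N) prob p v * #|Tv v|%:R)
     - S%:R * (\sum_(v : bids N) prob p v * #|Tv v|%:R ^+ 2).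
  by rewrite !mulr_sumr -sumrB; apply: eq_bigr => v _; ring.
rewrite e Ek Ek2 in h.
have e2 : S%:R * a * (N%:R * p) - S%:R * (N%:R * (p + (N.-1)%:R * p ^+ 2))
   = S%:R * N%:R * p * mu.
  by rewrite /a /mu; ring.
rewrite e2 in h.
have : (S%:R * N%:R * p) * mu <= (Em * mu) * mu.
  by move: h; rewrite expr2 mulrA.
by rewrite ler_pM2r.
Qed.


Lemma Em_ub : Em <= N%:R * p.
Proof.
rewrite -Ek; apply: ler_sum => v _; apply: ler_wpM2l; first exact: prob_ge0.
by rewrite ler_nat geq_minl.
Qed.

Lemma Em_ge0 : 0 <= Em.
Proof. by apply: sumr_ge0 => v _; apply: mulr_ge0; [exact: prob_ge0|]. Qed.

Lemma Em_leS : Em <= S%:R.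
Proof.
apply: le_trans (_ : \sum_(v : bids N) prob p v * S%:R <= _).
  apply: ler_sum => v _; apply: ler_wpM2l; first exact: prob_ge0.
  by rewrite ler_nat geq_minr.
by rewrite -mulr_suml Eone mul1r.
Qed.

Definition Bset (v : bids N) m : {set 'I_N} :=
  odflt set0 [pick B : {set 'I_N} | (#|B| == m) && (#|B :&: Tv v| == minn m #|Tv v|)].

Lemma Bset_prop v m : (m <= N)%N ->
  #|Bset v m| = m /\ #|Bset v m :&: Tv v| = minn m #|Tv v|.
Proof.
move=> hm; rewrite /Bset; case: pickP => [B /andP[/eqP -> /eqP ->]|none] //=.
have hmN : (m <= #|{: 'I_N}|)%N by rewrite card_ord.
have [B [h1 h2]] := mk_set (Tv v) hmN.
by move: (none B); rewrite h1 h2 !eqxx.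
Qed.

Definition ind_rule (Bf : bids N -> {set 'I_N}) (v : bids N) (A : {set 'I_N}) : R :=
  if A == Bf v then 1 else 0.

Lemma ind_alloc (Bf : bids N -> {set 'I_N}) : (forall v, #|Bf v| <= S)%N -> alloc_rule S (ind_rule Bf).
Proof.
move=> hB v; split.
- by move=> A; rewrite /ind_rule; case: ifP.
- by move=> A; rewrite /ind_rule; case: ifP => [/eqP -> _|_]; rewrite ?eqxx.
rewrite (bigD1 (Bf v)) //= /ind_rule eqxx big1 ?addr0 // => A /negbTE -> //.
Qed.

Lemma wv_eq (pi : bids N -> {set 'I_N} -> R) (v : bids N) :
  \sum_(n < N) Qn pi n v * Defs.val L H (v n) =
  \sum_(A : {set 'I_N}) pi v A * \sum_(n in A) Defs.val L H (v n).
Proof.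
rewrite /Qn.
transitivity (\sum_(n < N) \sum_(A : {set 'I_N}) (if n \in A then pi v A * Defs.val L H (v n) else 0)).
  by apply: eq_bigr => n _; rewrite big_distrl /= big_mkcond.
rewrite exchange_big /=; apply: eq_bigr => A _.
by rewrite big_distrr /= [RHS]big_mkcond.
Qed.

Lemma wv_ind (Bf : bids N -> {set 'I_N}) (v : bids N) :
  \sum_(n < N) Qn (ind_rule Bf) n v * Defs.val L H (v n) = \sum_(n in Bf v) Defs.val L H (v n).
Proof.
rewrite wv_eq (bigD1 (Bf v)) //= [X in _ + X]big1 => [|A /negbTE hA]; last by rewrite /ind_rule hA mul0r.
by rewrite /ind_rule eqxx mul1r addr0.
Qed.

Lemma bigmax_ub (F : {set 'I_N} -> R) x : 0 <= x ->
  (forall A : {set 'I_N}, (#|A| <= S)%N -> F A <= x) ->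
  \big[Num.max/0]_(A : {set 'I_N} | (#|A| <= S)%N) F A <= x.
Proof.
move=> x0 hF; apply: (big_ind (fun y => y <= x)) => // y z hy hz.
by rewrite ge_max hy hz.
Qed.

Lemma bigmax_lb (F : {set 'I_N} -> R) (A : {set 'I_N}) : (#|A| <= S)%N ->
  F A <= \big[Num.max/0]_(A : {set 'I_N} | (#|A| <= S)%N) F A.
Proof. by move=> hA; rewrite (bigD1 A) //= le_max lexx. Qed.

Lemma cnt_le (v : bids N) (C : {set 'I_N}) :
  (#|C :&: Tv v| <= #|C|)%N /\ (#|C :&: Tv v| <= #|Tv v|)%N.
Proof. by split; apply: subset_leq_card; rewrite ?subsetIl ?subsetIr. Qed.


Lemma gen_le (f : bool -> R) (v : bids N) (C B : {set 'I_N}) :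
  0 <= f false -> f false <= f true -> (#|C| <= S)%N -> #|B| = S ->
  #|B :&: Tv v| = minn S #|Tv v| ->
  \sum_(n in C) f (v n) <= \sum_(n in B) f (v n).
Proof.
move=> f0 f01 hC hB hBT; rewrite !sum_split hB hBT.
have [h1 h2] := cnt_le v C.
rewrite !natrB ?geq_minl //.
have hc : (#|C :&: Tv v|%:R <= (minn S #|Tv v|)%:R :> R).
  by rewrite ler_nat leq_min h2 (leq_trans h1 hC).
have hs : (#|C|%:R <= S%:R :> R) by rewrite ler_nat.
have e1 : 0 <= (S%:R - #|C|%:R) * f false by apply: mulr_ge0; lra.
have e2 : 0 <= ((minn S #|Tv v|)%:R - #|C :&: Tv v|%:R) * (f true - f false).
  by apply: mulr_ge0; lra.
rewrite -subr_ge0.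
set c := #|C :&: Tv v|%:R in hc e2 *; set m := (minn S #|Tv v|)%:R in hc e2 *.
set sC := #|C|%:R in hs e1 *.
have -> : m * f true + (S%:R - m) * f false - (c * f true + (sC - c) * f false)
  = (S%:R - sC) * f false + (m - c) * (f true - f false) by ring.
lra.
Qed.

Lemma mN (v : bids N) : (minn #|Tv v| S <= N)%N.
Proof. exact: leq_trans (geq_minr _ _) SN. Qed.

Lemma MSW_v (v : bids N) :
  \big[Num.max/0]_(A : {set 'I_N} | (#|A| <= S)%N) \sum_(n in A) Defs.val L H (v n)
  = (minn #|Tv v| S)%:R * H + (S%:R - (minn #|Tv v| S)%:R) * L.
Proof.
hyps.
have mS : ((minn #|Tv v| S)%:R <= S%:R :> R) by rewrite ler_nat geq_minr.
have m0 : (0 <= (minn #|Tv v| S)%:R :> R) by [].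
apply/eqP; rewrite eq_le; apply/andP; split.
  apply: bigmax_ub => [|C hC]; first by apply: addr_ge0; apply: mulr_ge0; lra.
  rewrite sum_split /= natrB; last by case: (cnt_le v C).
  have [h1 h2] := cnt_le v C.
  have hc : (#|C :&: Tv v|%:R <= (minn #|Tv v| S)%:R :> R).
    by rewrite ler_nat leq_min h2 (leq_trans h1 hC).
  have hs : (#|C|%:R <= S%:R :> R) by rewrite ler_nat.
  set c := #|C :&: Tv v|%:R in hc *; set m := (minn #|Tv v| S)%:R in hc mS m0 *.
  set sC := #|C|%:R in hs *.
  have e1 : 0 <= (S%:R - sC) * L by apply: mulr_ge0; lra.
  have e2 : 0 <= (m - c) * (H - L) by apply: mulr_ge0; lra.
  rewrite -subr_ge0.
  have -> : m * H + (S%:R - m) * L - (c * H + (sC - c) * L)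
    = (S%:R - sC) * L + (m - c) * (H - L) by ring.
  lra.
have [hB1 hB2] := Bset_prop v SN.
apply: le_trans (bigmax_lb _ (A := Bset v S) _); last by rewrite hB1.
by rewrite sum_split hB1 hB2 minnC natrB ?geq_minl // /Defs.val.
Qed.

Lemma MSW_eq : MSW N S L H p = H * Em + L * (S%:R - Em).
Proof.
rewrite /MSW.
under eq_bigr do rewrite MSW_v.
transitivity (H * Em + L * (S%:R * \sum_(v : bids N) prob p v) - L * Em).
  rewrite /Em !mulr_sumr -big_split -sumrB /=.
  by apply: eq_bigr => v _; ring.
by rewrite Eone mulr1; ring.
Qed.


Lemma vtrue : vval L H p true = H. Proof. by []. Qed.

Lemma opt_supp (pi : bids N -> {set 'I_N} -> R) :
  vval L H p false < 0 -> is_optimal S L H p pi ->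
  forall v A, pi v A != 0 ->
  \sum_(n in A) Defs.val L H (v n) = (minn #|Tv v| S)%:R * H.
Proof.
move=> vneg [hal hmax] v A hA; hyps.
have [_ hsz _] := hal v.
have hAS := hsz A hA.
have [hB1 hB2] := Bset_prop v (mN v).
have hBS : (#|Bset v (minn #|Tv v| S)| <= S)%N by rewrite hB1 geq_minr.
have := hmax v A hA _ hBS.
have mm : minn (minn #|Tv v| S) #|Tv v| = minn #|Tv v| S.
  by rewrite minnC minnA minnn.
rewrite !sum_split hB1 hB2 mm subnn mul0r addr0 vtrue.
have [h1 h2] := cnt_le v A.
rewrite natrB // /=.
have hc : (#|A :&: Tv v|%:R <= (minn #|Tv v| S)%:R :> R).
  by rewrite ler_nat leq_min h2 (leq_trans h1 hAS).
have hs : (#|A :&: Tv v|%:R <= #|A|%:R :> R) by rewrite ler_nat.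
set c := #|A :&: Tv v|%:R in hc hs *; set m := (minn #|Tv v| S)%:R in hc *.
set sA := #|A|%:R in hs *.
move=> hle.
rewrite /vval /= in vneg.
set w := (L - p * H) / (1 - p) in hle vneg.
have e1 : 0 <= (m - c) * H by apply: mulr_ge0; lra.
have e2 : 0 <= (sA - c) * w.
  have -> : (sA - c) * w = (c * H + (sA - c) * w - m * H) + (m - c) * H by ring.
  lra.
have e3 : sA - c = 0.
  apply/eqP; rewrite eq_le; apply/andP; split; last lra.
  rewrite -(@ler_nM2r _ w) // mul0r; lra.
have e4 : (m - c) * H <= 0 by move: hle; rewrite e3 mul0r addr0; lra.
have e5 : m - c = 0.
  apply/eqP; rewrite eq_le; apply/andP; split; last lra.
  have H0 : 0 < H by lra.
  nra.
by rewrite e3 mul0r addr0; lra.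
Qed.

Lemma neg_wv (pi : bids N -> {set 'I_N} -> R) :
  vval L H p false < 0 -> is_optimal S L H p pi -> forall v,
  \sum_(n < N) Qn pi n v * Defs.val L H (v n) = (minn #|Tv v| S)%:R * H.
Proof.
move=> vneg hopt v; rewrite wv_eq.
transitivity (\sum_(A : {set 'I_N}) pi v A * ((minn #|Tv v| S)%:R * H)).
  apply: eq_bigr => A _; case: (pi v A =P 0) => [->|/eqP h]; first by rewrite !mul0r.
  by rewrite (opt_supp vneg hopt h).
have [_ _ h1] := hopt.1 v.
by rewrite -mulr_suml h1 mul1r.
Qed.

Lemma neg_welfare (pi : bids N -> {set 'I_N} -> R) :
  vval L H p false < 0 -> is_optimal S L H p pi -> welfare L H p pi = H * Em.
Proof.
move=> vneg hopt; rewrite /welfare /Em mulr_sumr; apply: eq_bigr => v _.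
by rewrite (neg_wv vneg hopt); ring.
Qed.


Lemma D_pos : 0 < H * Em + L * (S%:R - Em).
Proof.
hyps; have := Em_ge0; have := Em_leS => e1 e2.
have s1 : 1 <= S%:R :> R by rewrite ler1n.
have -> : H * Em + L * (S%:R - Em) = L * S%:R + (H - L) * Em by ring.
have : 0 <= (H - L) * Em by apply: mulr_ge0; lra.
have : 0 < L * S%:R by apply: mulr_gt0; lra.
lra.
Qed.

Lemma ELR_neg (pi : bids N -> {set 'I_N} -> R) :
  vval L H p false < 0 -> is_optimal S L H p pi ->
  ELR N S L H p pi = L * (S%:R - Em) / (H * Em + L * (S%:R - Em)).
Proof.
move=> vneg hopt; rewrite /ELR MSW_eq (neg_welfare vneg hopt); congr (_ / _); ring.
Qed.

Lemma neg_bound (pi : bids N -> {set 'I_N} -> R) :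
  vval L H p false < 0 -> is_tilde_opt N S L H p pi ->
  ELR N S L H p pi <= S%:R / (S + N)%:R.
Proof.
move=> vneg [hopt _]; rewrite (ELR_neg vneg hopt); hyps.
have Dp := D_pos.
have SN0 : 0 < (S + N)%:R :> R by rewrite ltr0n addn_gt0 S1.
rewrite ler_pdivrMr // mulrAC ler_pdivlMr //.
have s1 : 1 <= S%:R :> R by rewrite ler1n.
have n1 : 1 <= N%:R :> R by rewrite ler1n (leq_trans S1 SN).
have LpH : L < p * H.
  move: vneg; rewrite /vval /= ltr_pdivrMr ?subr_gt0 // mul0r; lra.
set mu := S%:R + (N.-1)%:R * p.
have n0 : 0 <= (N.-1)%:R :> R by [].
have mu0 : 0 < mu by rewrite /mu; have := mulr_ge0 n0 (ltW p0); lra.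
have hE := Em_lb; rewrite -/mu in hE.
have NN : N%:R = (N.-1)%:R + 1 :> R.
  by rewrite natr1 prednK // (leq_trans S1 SN).
have h2 : N%:R * L * S%:R * mu <= S%:R * N%:R * p * (S%:R * H + N%:R * L).
  rewrite -subr_ge0.
  have -> : S%:R * N%:R * p * (S%:R * H + N%:R * L) - N%:R * L * S%:R * mu
     = S%:R * N%:R * (S%:R * (p * H - L) + L * p).
    by rewrite /mu NN; ring.
  apply: mulr_ge0; first by apply: mulr_ge0; lra.
  have : 0 <= S%:R * (p * H - L) by apply: mulr_ge0; lra.
  have : 0 <= L * p by apply: mulr_ge0; lra.
  lra.
have h1 : S%:R * N%:R * p * (S%:R * H + N%:R * L) <= Em * mu * (S%:R * H + N%:R * L).
  by apply: ler_wpM2r => //; apply: addr_ge0; apply: mulr_ge0; lra.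
have key : N%:R * L * S%:R <= Em * (S%:R * H + N%:R * L).
  rewrite -(@ler_pM2r _ mu) //.
  have -> : Em * (S%:R * H + N%:R * L) * mu = Em * mu * (S%:R * H + N%:R * L) by ring.
  exact: le_trans h2 h1.
rewrite natrD -subr_ge0.
have -> : S%:R * (H * Em + L * (S%:R - Em)) - L * (S%:R - Em) * (S%:R + N%:R)
  = Em * (S%:R * H + N%:R * L) - N%:R * L * S%:R by ring.
lra.
Qed.


Lemma vval_le : vval L H p false <= H.
Proof.
hyps; rewrite /vval /= ler_pdivrMr ?subr_gt0 //.
have : p * H <= p * H by [].
nra.
Qed.

Lemma nonneg_bound (pi : bids N -> {set 'I_N} -> R) :
  0 <= vval L H p false -> is_tilde_opt N S L H p pi ->
  ELR N S L H p pi <= 0.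
Proof.
move=> vpos [hopt hbest].
pose pi0 := ind_rule (fun v => Bset v S).
have opt0 : is_optimal S L H p pi0.
  split; first by apply: ind_alloc => v; rewrite (Bset_prop v SN).1.
  move=> v A; rewrite /pi0 /ind_rule; case: (A =P _) => [-> _|_]; last by rewrite eqxx.
  move=> B hB; have [hB1 hB2] := Bset_prop v SN.
  apply: gen_le => //; exact: vval_le.
have := hbest _ opt0.
have -> : welfare L H p pi0 = MSW N S L H p.
  rewrite /welfare /MSW; apply: eq_bigr => v _; rewrite wv_ind MSW_v.
  have [hB1 hB2] := Bset_prop v SN.
  by rewrite sum_split hB1 hB2 minnC natrB ?geq_minl ?geq_minr // /Defs.val.
move=> hW; rewrite /ELR; apply: mulr_le0_ge0; first lra.
rewrite invr_ge0 MSW_eq; exact: ltW D_pos.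
Qed.

Lemma neg_exists :
  vval L H p false < 0 ->
  exists pi, is_tilde_opt N S L H p pi /\
    ELR N S L H p pi = L * (S%:R - Em) / (H * Em + L * (S%:R - Em)).
Proof.
move=> vneg; hyps.
pose pi0 := ind_rule (fun v => Bset v (minn #|Tv v| S)).
have opt0 : is_optimal S L H p pi0.
  split.
    apply: ind_alloc => v; rewrite (Bset_prop v (mN v)).1; exact: geq_minr.
  move=> v A; rewrite /pi0 /ind_rule; case: (A =P _) => [-> _|_]; last by rewrite eqxx.
  move=> C hC; have [hB1 hB2] := Bset_prop v (mN v).
  have mm : minn (minn #|Tv v| S) #|Tv v| = minn #|Tv v| S.
    by rewrite minnC minnA minnn.
  rewrite !sum_split hB1 hB2 mm subnn mul0r addr0 vtrue.
  have [h1 h2] := cnt_le v C.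
  have hc : (#|C :&: Tv v|%:R <= (minn #|Tv v| S)%:R :> R).
    by rewrite ler_nat leq_min h2 (leq_trans h1 hC).
  have hs : (0 <= (#|C| - #|C :&: Tv v|)%:R :> R) by [].
  have : (#|C| - #|C :&: Tv v|)%:R * vval L H p false <= 0.
    by apply: mulr_ge0_le0 => //; exact: ltW.
  have : #|C :&: Tv v|%:R * H <= (minn #|Tv v| S)%:R * H.
    by apply: ler_wpM2r => //; lra.
  lra.
exists pi0; split; last exact: ELR_neg.
split => // pi' hopt'.
by rewrite (neg_welfare vneg hopt') (neg_welfare vneg opt0).
Qed.

End Main.

Unset Implicit Arguments.

Lemma num2b (R : realType) (s n e x d : R) : 1 <= s -> 0 <= n -> 0 < e -> 0 < d ->
  d <= 1 / 2 -> 2 * n * d < e -> 0 <= x -> x <= n * d -> x <= s ->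
  s / (s + n) - e < (1 - d) * d * (s - x) / (1 * x + (1 - d) * d * (s - x)).
Proof.
move=> s1 n0 e0 d0 d2 hnd x0 xnd xs.
set L := (1 - d) * d.
have L0 : 0 < L by rewrite /L; apply: mulr_gt0; lra.
have L1 : L < 1 by rewrite /L; nra.
set D := 1 * x + L * (s - x).
have DLs : L * s <= D by rewrite /D; nra.
have LS : 0 < L * s by apply: mulr_gt0; lra.
have D0 : 0 < D by lra.
have sn0 : 0 < s + n by lra.
rewrite ltr_pdivlMr // mulrBl ltrBlDr mulrAC ltr_pdivrMr //.
rewrite -subr_gt0.
have f1 : 0 <= n * L * (n * d - x) by apply: mulr_ge0; [apply: mulr_ge0|]; lra.
have f2 : s * x <= s * (n * d) by apply: ler_wpM2l; lra.
have f3 : 0 <= e * (s + n) * (D - L * s) by apply: mulr_ge0; [apply: mulr_ge0|]; lra.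
have f5 : 0 < e * (1 - d) * s - n * d.
  have : 0 <= e * ((1 - d) * (s - 1) + (1/2 - d)).
    by apply: mulr_ge0; [lra | apply: addr_ge0; [apply: mulr_ge0|]; lra].
  lra.
have f6 : 0 < d * (s + n) * (e * (1 - d) * s - n * d).
  by apply: mulr_gt0 => //; apply: mulr_gt0.
have f7 : 0 <= n ^+ 2 * d ^+ 3 by apply: mulr_ge0; apply: exprn_ge0; lra.
have -> : (L * (s - x) + e * D) * (s + n) - s * D =
  (n * L * (s - x) - s * x + e * D * (s + n)) by rewrite /D; ring.
have -> : n * L * (s - x) - s * x + e * D * (s + n) =
  n * L * (n * d - x) + (s * (n * d) - s * x) + e * (s + n) * (D - L * s)
  + (d * (s + n) * (e * (1 - d) * s - n * d) + n ^+ 2 * d ^+ 3).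
  by rewrite /L; ring.
lra.
Qed.

Theorem proposition4 (R : realType) (N S : nat) :
  (1 <= S)%N -> (S <= N)%N ->
  (forall r : R, 1 < r ->
     forall L H p : R, 0 < L -> L < H -> H <= r * L -> 0 < p -> p < 1 ->
     forall pi, is_tilde_opt N S L H p pi ->
       ELR N S L H p pi <= S%:R / (S + N)%:R)
  /\
  ((forall L H p : R, 0 < L -> L < H -> 0 < p -> p < 1 ->
     forall pi, is_tilde_opt N S L H p pi ->
       ELR N S L H p pi <= S%:R / (S + N)%:R)
   /\
   (forall eps : R, 0 < eps ->
     exists L H p : R,
       [/\ 0 < L, L < H, 0 < p, p < 1 &
        exists pi, is_tilde_opt N S L H p pi /\
          S%:R / (S + N)%:R - eps < ELR N S L H p pi])).
Proof.
move=> S1 SN.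
have part2 : forall L H p : R, 0 < L -> L < H -> 0 < p -> p < 1 ->
     forall pi, is_tilde_opt N S L H p pi ->
       ELR N S L H p pi <= S%:R / (S + N)%:R.
  move=> L H p L0 LH p0 p1 pi hpi.
  case: (ltrP (vval L H p false) 0) => hv.
    exact: (neg_bound SN S1 L0 LH p0 p1 hv hpi).
  apply: le_trans (nonneg_bound SN S1 L0 LH p0 p1 hv hpi) _.
  by apply: divr_ge0.
split; first by move=> r _ L H p L0 LH _ p0 p1; exact: part2.
split => // eps eps0.
set e' := Num.min eps 1.
have e'0 : 0 < e' by rewrite lt_min eps0 ltr01.
have e'e : e' <= eps by rewrite ge_min lexx.
have e'1 : e' <= 1 by rewrite ge_min lexx orbT.
have n0 : 0 <= N%:R :> R by [].
have N1 : 0 < 2 * (N%:R + 1) :> R by lra.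
set d := e' / (2 * (N%:R + 1)).
have hd : d * (2 * (N%:R + 1)) = e' by rewrite /d divfK // gt_eqF.
have d0 : 0 < d by rewrite /d divr_gt0.
have d2 : d <= 1 / 2.
  have : d * (2 * (N%:R + 1)) <= 1 by rewrite hd.
  have : d * 2 <= d * (2 * (N%:R + 1)) by apply: ler_wpM2l; lra.
  lra.
have hnd : 2 * N%:R * d < eps.
  have : 2 * N%:R * d <= 2 * (N%:R + 1) * d - 2 * d by lra.
  have : 2 * (N%:R + 1) * d = e' by rewrite mulrC.
  lra.
set L := (1 - d) * d.
have L0 : 0 < L by rewrite /L; apply: mulr_gt0; lra.
have L1 : L < 1 by rewrite /L; nra.
have p1 : d < 1 by lra.
have hv : vval L 1 d false < 0.
  rewrite /vval /= ltr_pdivrMr ?subr_gt0 // mul0r /L; nra.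
have [pi [hpi hE]] := neg_exists SN L0 L1 d0 p1 hv.
exists L, 1, d; split => //; exists pi; split => //.
rewrite hE.
have s1 : 1 <= S%:R :> R by rewrite ler1n.
rewrite natrD /L; apply: num2b => //.
- exact: (@Em_ge0 R N S L 1 d L0 L1 d0 p1).
- exact: (@Em_ub R N S L 1 d L0 L1 d0 p1).
- exact: (@Em_leS R N S L 1 d L0 L1 d0 p1).
Qed.
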